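(* Let $\mathbb{F}$ be a field, let $P(\lambda)\in\mathbb{F}[\lambda]^{m\times n}$ have normal rank $r>0$, and let $P(\lambda)=L(\lambda)E(\lambda)R(\lambda)$ with $L\in\mathbb{F}[\lambda]^{m\times r}$, $E\in\mathbb{F}[\lambda]^{r\times r}$, $R\in\mathbb{F}[\lambda]^{r\times n}$. Let $\rho_{max}$ be the largest minimal index of $\mathcal{R}ow(P)$ and $c_{max}$ the largest minimal index of $\mathcal{C}ol(P)$. Then $$\deg(L)+\deg(E)+\deg(R)\ge\deg(L)+\deg(R)\ge\rho_{max}+c_{max}.$$ Consequently, if $\rho_{max}+c_{max}>\deg(P)$, then no such factorization $P=LER$ (nor any factorization $P=LR$ with $L\in\mathbb{F}[\lambda]^{m\times r}$, $R\in\mathbb{F}[\lambda]^{r\times n}$) has the sum of the degrees of its factors equal to $\deg(P)$.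
   Context: Normal rank: rank over $\mathbb{F}(\lambda)$. Degree of a polynomial matrix: maximum degree of its entries. $\mathcal{R}ow(P)=\{wP:w\in\mathbb{F}(\lambda)^{1\times m}\}$, $\mathcal{C}ol(P)=\{Pv:v\in\mathbb{F}(\lambda)^{n\times1}\}$. Minimal indices of a rational subspace: the degrees of the vectors of a minimal basis, i.e. a basis of polynomial vectors whose sum of degrees is minimal among all polynomial bases. *)

(* Defs.v *)
From HB Require Import structures.
From mathcomp Require Import all_boot all_order all_algebra.
Set Implicit Arguments. Unset Strict Implicit. Unset Printing Implicit Defensive.
Import Order.TTheory GRing.Theory Num.Theory.
Local Open Scope ring_scope.

Notation ratF F := {fraction {poly F}}.

Definition ratmx (F : fieldType) (m n : nat) (P : 'M[{poly F}]_(m, n))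
  : 'M[ratF F]_(m, n) := map_mx (@FracField.tofrac _) P.

Definition nrank (F : fieldType) (m n : nat) (P : 'M[{poly F}]_(m, n)) : nat :=
  \rank (ratmx P).

(* Degree of a polynomial matrix: maximum of the degrees of its entries
   (a zero entry contributes 0; only used for nonzero matrices). *)
Definition mxdeg (F : fieldType) (m n : nat) (P : 'M[{poly F}]_(m, n)) : nat :=
  \max_(i < m) \max_(j < n) (size (P i j)).-1.

Definition poly_row_basis (F : fieldType) (k n d : nat)
  (S : 'M[ratF F]_(k, n)) (B : 'M[{poly F}]_(d, n)) : bool :=
  row_free (ratmx B) && (ratmx B == S)%MS.

Definition min_row_basis (F : fieldType) (k n d : nat)
  (S : 'M[ratF F]_(k, n)) (B : 'M[{poly F}]_(d, n)) : Prop :=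
  poly_row_basis S B /\
  forall (d' : nat) (B' : 'M[{poly F}]_(d', n)), poly_row_basis S B' ->
    (\sum_(i < d) mxdeg (row i B) <= \sum_(i < d') mxdeg (row i B'))%N.

Definition min_basis_Row (F : fieldType) (m n d : nat)
  (P : 'M[{poly F}]_(m, n)) (B : 'M[{poly F}]_(d, n)) : Prop :=
  min_row_basis (ratmx P) B.

(* Minimal basis of Col(P) (basis vectors = columns of C); Col(P) is
   identified with the row space of P^T. *)
Definition min_basis_Col (F : fieldType) (m n d : nat)
  (P : 'M[{poly F}]_(m, n)) (C : 'M[{poly F}]_(m, d)) : Prop :=
  min_row_basis (ratmx P^T) C^T.

(* Main.v *)
Require Import Defs.
From HB Require Import structures.
From mathcomp Require Import all_boot all_order all_algebra.
From mathcomp Require Import zify.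
Import Order.TTheory GRing.Theory Num.Theory.
Local Open Scope ring_scope.

Lemma exchange_row (K : fieldType) d n d' (A : 'M[K]_(d, n)) (A' : 'M[K]_(d', n))
  (i : 'I_d) :
  row_free A -> (A' == A)%MS ->
  exists k, row_free (\matrix_(j, l) (if j == i then A' k l else A j l)) &&
            ((\matrix_(j, l) (if j == i then A' k l else A j l)) == A)%MS.
Proof.
move=> fA /andP [A'A AA'].
set u := row i A.
set dv := \row_(a < d) ((a != i)%:R : K).
set W := diag_mx dv *m A.
have rowW j : row j W = if j == i then 0 else row j A.
  apply/rowP => l; rewrite /W mul_diag_mx !mxE.
  by case: (j =P i) => _ /=; rewrite ?mul0r ?mul1r ?mxE.
have uW : ~~ (u <= W)%MS.
  apply/negP => /submxP [x ux].
  have : ('e_i - x *m diag_mx dv) *m A = 0.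
    by rewrite mulmxBl -rowE -mulmxA -ux subrr.
  move/eqP; rewrite mulmx_free_eq0 // subr_eq0 => /eqP/matrixP/(_ 0 i).
  rewrite mul_mx_diag !mxE !eqxx /= mulr0 => /eqP; by rewrite oner_eq0.
have [k Hk] : exists k, ~~ (row k A' <= W)%MS.
  case: (pickP (fun k => ~~ (row k A' <= W)%MS)) => [k Hk | H]; first by exists k.
  have A'W : (A' <= W)%MS by apply/row_subP => k; move: (H k) => /= /negbFE.
  by move: uW; rewrite (submx_trans (row_sub i A) (submx_trans AA' A'W)).
exists k.
set A0 := \matrix_(j, l) _.
have rowA0 j : row j A0 = if j == i then row k A' else row j A.
  by apply/rowP => l; rewrite !mxE; case: (j == i); rewrite mxE.
have A0S : (A0 <= A)%MS.
  apply/row_subP => j; rewrite rowA0; case: (j == i).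
    exact: submx_trans (row_sub k A') A'A.
  exact: row_sub.
have WA0 : (W <= A0)%MS.
  apply/row_subP => j; rewrite rowW; case: ifP => ji; first exact: sub0mx.
  by have := row_sub j A0; rewrite rowA0 ji.
have vA0 : (row k A' <= A0)%MS by have := row_sub i A0; rewrite rowA0 eqxx.
have AWu : (A <= W + u)%MS.
  apply/row_subP => j; case: (boolP (j == i)) => [/eqP -> | ji].
    exact: addsmxSr.
  have := rowW j; rewrite (negbTE ji) => <-.
  exact: submx_trans (row_sub j W) (addsmxSl W u).
have r1 : (\rank A <= \rank (W + u))%N by exact: mxrankS.
have r2 : (\rank (W + u) <= \rank W + 1)%N.
  apply: leq_trans (mxrank_adds_leqif W u).1 _.
  by rewrite leq_add2l rank_leq_row.
have r3 : (\rank W < \rank (W + row k A'))%N.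
  apply: rank_ltmx; rewrite ltmxE addsmxSl /=.
  apply/negP => H; move: Hk; by rewrite (submx_trans (addsmxSr W _) H).
have r4 : (\rank (W + row k A') <= \rank A0)%N.
  by apply: mxrankS; rewrite addsmx_sub WA0 vA0.
have r5 := rank_leq_row A0.
have rA : \rank A = d by apply/eqP.
have rA0 : \rank A0 = d by rewrite addn1 in r2; lia.
rewrite /row_free rA0 eqxx /=.
by rewrite -(mxrank_leqif_eq A0S).2 rA rA0.
Qed.

Lemma mxdeg_row (F : fieldType) d n (B : 'M[{poly F}]_(d, n)) i :
  mxdeg (row i B) = \max_(j < n) (size (B i j)).-1.
Proof. by rewrite /mxdeg big_ord1; apply: eq_bigr => j _; rewrite mxE. Qed.

Lemma mxdeg_tr (F : fieldType) m n (A : 'M[{poly F}]_(m, n)) :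
  mxdeg A^T = mxdeg A.
Proof.
rewrite /mxdeg exchange_big; apply: eq_bigr => i _; apply: eq_bigr => j _.
by rewrite mxE.
Qed.

Lemma ratmxM (F : fieldType) m n p (A : 'M[{poly F}]_(m, n)) (B : 'M_(n, p)) :
  ratmx (A *m B) = ratmx A *m ratmx B.
Proof. exact: map_mxM. Qed.

Lemma ratmx_tr (F : fieldType) m n (A : 'M[{poly F}]_(m, n)) :
  ratmx A^T = (ratmx A)^T.
Proof. by rewrite /ratmx map_trmx. Qed.

Lemma basis_deg (F : fieldType) k n d d' (S : 'M[ratF F]_(k, n))
  (B : 'M[{poly F}]_(d, n)) (B' : 'M[{poly F}]_(d', n)) :
  min_row_basis S B -> poly_row_basis S B' -> (mxdeg B <= mxdeg B')%N.
Proof.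
move=> [/andP [fB BS] minB] /andP [fB' B'S].
rewrite {1}/mxdeg; apply/bigmax_leqP => i _.
rewrite -mxdeg_row leqNgt; apply/negP => H.
have B'B : (ratmx B' == ratmx B)%MS.
  move/andP: BS => [h1 h2]; move/andP: B'S => [h3 h4].
  by rewrite /eqmx (submx_trans h3 h2) (submx_trans h1 h4).
have [kk /andP [f0 e0]] := @exchange_row _ _ _ _ _ _ i fB B'B.
set B0 : 'M[{poly F}]_(d, n) := \matrix_(j, l) (if j == i then B' kk l else B j l).
have eB0 : ratmx B0 = \matrix_(j, l) (if j == i then ratmx B' kk l else ratmx B j l).
  by apply/matrixP => j l; rewrite !mxE; case: (j == i).
have pB0 : poly_row_basis S B0.
  rewrite /poly_row_basis eB0 f0 /=.
  move/andP: BS => [h1 h2]; move/andP: e0 => [h3 h4].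
  by rewrite /eqmx (submx_trans h3 h1) (submx_trans h2 h4).
have := minB _ _ pB0.
rewrite (bigD1 i) //= [X in (_ <= X)%N](bigD1 i) //=.
rewrite [X in (_ <= _ + X)%N](eq_bigr (fun j => mxdeg (row j B))); last first.
  move=> j ji; rewrite !mxdeg_row; apply: eq_bigr => l _.
  by rewrite /B0 mxE (negbTE ji).
have : (mxdeg (row i B0) <= mxdeg B')%N.
  rewrite mxdeg_row; apply/bigmax_leqP => l _; rewrite mxE eqxx.
  rewrite /mxdeg; apply: leq_trans (@leq_bigmax _ (fun j => (size (B' kk j)).-1) l) (@leq_bigmax _ (fun i => \max_(j < n) (size (B' i j)).-1) kk).
lia.
Qed.

Lemma fact_basis (F : fieldType) m n r (P : 'M[{poly F}]_(m, n))
  (L : 'M[{poly F}]_(m, r)) (R : 'M[{poly F}]_(r, n)) :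
  nrank P = r -> P = L *m R -> poly_row_basis (ratmx P) R.
Proof.
move=> rP PLR.
have PR : (ratmx P <= ratmx R)%MS by rewrite PLR ratmxM submxMl.
have r1 := rank_leq_row (ratmx R).
have r2 := mxrankS PR.
rewrite /nrank in rP.
have rR : \rank (ratmx R) = r by lia.
rewrite /poly_row_basis /row_free rR eqxx /= /eqmx PR andbT.
by rewrite -(mxrank_leqif_sup PR).2 rR rP.
Qed.

Theorem lemma3p4 (F : fieldType) (m n r : nat) (P : 'M[{poly F}]_(m, n)) :
  nrank P = r -> (0 < r)%N ->
  forall (d1 d2 : nat) (B : 'M[{poly F}]_(d1, n)) (C : 'M[{poly F}]_(m, d2)),
  min_basis_Row P B -> min_basis_Col P C ->
  (forall (L : 'M[{poly F}]_(m, r)) (E : 'M[{poly F}]_r) (R : 'M[{poly F}]_(r, n)),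
     P = L *m E *m R ->
     (mxdeg L + mxdeg R <= mxdeg L + mxdeg E + mxdeg R)%N /\
     (mxdeg B + mxdeg C <= mxdeg L + mxdeg R)%N)
  /\
  ((mxdeg P < mxdeg B + mxdeg C)%N ->
     (forall (L : 'M[{poly F}]_(m, r)) (E : 'M[{poly F}]_r) (R : 'M[{poly F}]_(r, n)),
        P = L *m E *m R -> (mxdeg L + mxdeg E + mxdeg R <> mxdeg P)%N) /\
     (forall (L : 'M[{poly F}]_(m, r)) (R : 'M[{poly F}]_(r, n)),
        P = L *m R -> (mxdeg L + mxdeg R <> mxdeg P)%N)).
Proof.
move=> rP _ d1 d2 B C hB hC.
have part1 : forall (L : 'M[{poly F}]_(m, r)) (E : 'M[{poly F}]_r) (R : 'M[{poly F}]_(r, n)),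
     P = L *m E *m R ->
     (mxdeg L + mxdeg R <= mxdeg L + mxdeg E + mxdeg R)%N /\
     (mxdeg B + mxdeg C <= mxdeg L + mxdeg R)%N.
  move=> L E R PE; split; first lia.
  have h1 := @basis_deg _ _ _ _ _ _ _ _ hB (@fact_basis _ _ _ _ _ _ _ rP PE).
  have rPt : nrank P^T = r by rewrite /nrank ratmx_tr mxrank_tr.
  have PEt : P^T = R^T *m (L *m E)^T by rewrite PE trmx_mul.
  have h2 := @basis_deg _ _ _ _ _ _ _ _ hC (@fact_basis _ _ _ _ _ _ _ rPt PEt).
  rewrite !mxdeg_tr in h2.
  have PE' : P^T = (E *m R)^T *m L^T by rewrite PE -mulmxA trmx_mul.
  have h3 := @basis_deg _ _ _ _ _ _ _ _ hC (@fact_basis _ _ _ _ _ _ _ rPt PE').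
  rewrite !mxdeg_tr in h3.
  lia.
split=> //.
move=> Hlt; split.
  move=> L E R PE; have [h1 h2] := part1 L E R PE; lia.
move=> L R PE.
have PE' : P = L *m 1%:M *m R by rewrite mulmx1.
have [h1 h2] := part1 L 1%:M R PE'; lia.
Qed.
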